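(* For all integers $m,n\ge 0$, \[ S(m,n)=(-1)^m\sum_{P\in\mathcal{P}_{m+n}}(-1)^{h_{2m}(P)}, \] where $S(m,n)=\frac{(2m)!\,(2n)!}{m!\,n!\,(m+n)!}$.
   Context: For an integer $N\ge 0$, $\mathcal{P}_N$ denotes the set of all lattice paths $P=(P_0,P_1,\dots,P_{2N})$ from $P_0=(0,0)$ to $P_{2N}=(N,N)$ consisting of unit steps to the right (adding $(1,0)$) and up (adding $(0,1)$). For $0\le k\le 2N$, $h_k(P)$ denotes the $y$-coordinate of $P_k$, i.e. the height of $P$ after its $k$-th step. *)

(* Defs.v *)
From HB Require Import structures.
From mathcomp Require Import all_boot all_order all_algebra.
Set Implicit Arguments. Unset Strict Implicit. Unset Printing Implicit Defensive.
Import Order.TTheory GRing.Theory Num.Theory.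

(* A lattice path P in P_N is encoded by its sequence of 2N unit steps:
   [true] = up step (0,1), [false] = right step (1,0).  The path starts at
   (0,0); it ends at (N,N) iff it has exactly N up steps (hence N right steps). *)
Definition lattice_path (N : nat) (t : (2 * N).-tuple bool) : bool :=
  count id t == N.

(* h_k(P): the y-coordinate of P_k = number of up steps among the first k steps. *)
Definition height (s : seq bool) (k : nat) : nat := count id (take k s).

Definition superCatalan (m n : nat) : rat :=
  (((2 * m)`! * (2 * n)`!)%:R / (m`! * n`! * (m + n)`!)%:R)%R.

(* Main.v *)
From Stdlib Require Import Arith.
Require Import Defs.
From mathcomp Require Import all_boot all_order all_algebra.
Import GRing.Theory Num.Theory.
Local Open Scope ring_scope.

Definition w (k i : nat) (b : bool) : {poly rat} :=
  if b then (if (i < k)%N then - 'X else 'X) else 1.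

Lemma wS k i b : w k i.+1 b = w k.-1 i b.
Proof. by rewrite /w; case: k. Qed.

Lemma L1 (s : seq bool) (k : nat) :
  \prod_(0 <= i < size s) w k i (nth false s i)
  = (-1) ^+ (count id (take k s)) *: 'X^(count id s).
Proof.
elim: s k => [|b s IH] k.
  by rewrite big_nil /= scale1r expr0.
rewrite /= big_nat_recl // /=.
under eq_bigr do rewrite wS.
rewrite IH.
case: b; case: k => [|k] /=; rewrite /w /= ?take0 /= ?mul1r //.
- by rewrite expr0 !scale1r exprS.
- by rewrite mulNr -scalerAr -exprS !add1n [(-1) ^+ _.+1]exprS -scalerA scaleN1r.
Qed.

Lemma L2 (L k : nat) :
  \sum_(t : L.-tuple bool) \prod_(i < L) w k i (tnth t i)
  = \prod_(i < L) (w k i false + w k i true).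
Proof.
have -> : \prod_(i < L) (w k i false + w k i true)
        = \prod_(i < L) \sum_(b : bool) w k i b.
  by apply: eq_bigr => i _; rewrite big_bool /= addrC.
rewrite bigA_distr_bigA.
rewrite (reindex (fun t : L.-tuple bool => [ffun i => tnth t i])) /=.
  by apply: eq_bigr => t _; apply: eq_bigr => i _; rewrite ffunE.
exists (fun f : {ffun 'I_L -> bool} => [tuple f i | i < L]) => x _.
  by apply: eq_from_tnth => i; rewrite tnth_mktuple ffunE.
by apply/ffunP => i; rewrite ffunE tnth_mktuple.
Qed.

Lemma L3 (L k : nat) : (k <= L)%N ->
  \prod_(i < L) (w k i false + w k i true) = (1 - 'X) ^+ k * (1 + 'X) ^+ (L - k).
Proof.
move=> hk.
rewrite -(big_mkord xpredT (fun i => w k i false + w k i true)).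
rewrite (big_cat_nat (leq0n k) hk) /=.
rewrite -(subn0 k) -!prodr_const_nat subn0.
congr (_ * _); apply: eq_big_nat => i /andP [h1 h2]; rewrite /w.
  by rewrite h2.
by rewrite ltnNge h1.
Qed.

Lemma key (L k N : nat) : (k <= L)%N ->
  \sum_(t : L.-tuple bool | count id t == N) (-1) ^+ (count id (take k t))
  = ((1 - 'X) ^+ k * (1 + 'X) ^+ (L - k) : {poly rat})`_N.
Proof.
move=> hk; rewrite -L3 // -L2 coef_sum.
rewrite big_mkcond /=; apply: eq_bigr => t _.
have -> : \prod_(i < L) w k i (tnth t i) = \prod_(0 <= i < size t) w k i (nth false t i).
  rewrite size_tuple big_mkord; apply: eq_bigr => i _; by rewrite (tnth_nth false).
rewrite L1 coefZ coefXn eq_sym.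
by case: eqP => _; rewrite ?mulr1 ?mulr0.
Qed.

Definition G (m n : nat) : {poly rat} := (1 - 'X) ^+ (2 * m) * (1 + 'X) ^+ (2 * n).

Lemma sqdiff : (1 + 'X) ^+ 2 - (1 - 'X) ^+ 2 = 'X *+ 4 :> {poly rat}.
Proof.
rewrite sqrrD sqrrB expr1n mul1r !(addrAC 1 _ ('X^2)).
by rewrite (addrC (1 + 'X^2) ('X*+2)) addrKA opprK -mulrnDr.
Qed.

Lemma Grec m n : G m n.+1 - G m.+1 n = G m n * 'X *+ 4.
Proof.
rewrite /G !mulnS !exprD mulrCA -(mulrA ((1 - 'X) ^+ 2)) -mulrBl sqdiff.
by rewrite mulrnAl mulrC.
Qed.

Definition T (m n : nat) : rat := (-1) ^+ m * (G m n)`_(m + n).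

Lemma Trec m n : T m.+1 n = T m n *+ 4 - T m n.+1.
Proof.
have h := congr1 (fun p : {poly rat} => p`_(m + n).+1) (Grec m n).
move: h => /=; rewrite coefB coefMn coefMX /= => h.
have e : (G m.+1 n)`_(m + n).+1 = (G m n.+1)`_(m + n).+1 - (G m n)`_(m + n) *+ 4.
  by rewrite -h opprB addrC subrK.
rewrite /T addSn addnS e exprS mulN1r mulNr mulrBr opprB.
by rewrite mulrnAr.
Qed.

Lemma Tbase n : T 0 n = 'C(2 * n, n)%:R.
Proof.
rewrite /T /G expr0 mul1r mul1r add0n addrC exprD1n coef_sum.
have hlt : (n < (2 * n).+1)%N by rewrite ltnS mul2n -addnn leq_addr.
rewrite (bigD1 (@Ordinal (2 * n).+1 n hlt)) //=.
rewrite coefMn coefXn eqxx mulr1n big1 ?addr0 //.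
move=> i hi; rewrite coefMn coefXn.
case: eqP => [hi'|]; last by rewrite mul0rn.
by move: hi; rewrite -val_eqE /= -hi' eqxx.
Qed.

Lemma divnat (a b c d : nat) : (0 < b)%N -> (0 < d)%N -> (a * d = c * b)%N ->
  (a%:R / b%:R = c%:R / d%:R :> rat).
Proof.
move=> hb hd h; apply/eqP; rewrite eqr_div ?pnatr_eq0 -?lt0n //.
by rewrite -!natrM h.
Qed.

Lemma Sbase n : superCatalan 0 n = 'C(2 * n, n)%:R.
Proof.
rewrite /superCatalan muln0 fact0 mul1n add0n mul1n -[RHS]divr1.
rewrite -[1 : rat]/(1%:R); apply: divnat; rewrite ?muln_gt0 ?fact_gt0 //.
have hn : (n <= 2 * n)%N by rewrite mul2n -addnn leq_addr.
rewrite -(bin_fact hn) muln1.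
have e : (2 * n - n = n)%N by rewrite mul2n -addnn addnK.
by rewrite e.
Qed.

Lemma Srec m n : superCatalan m.+1 n = superCatalan m n *+ 4 - superCatalan m n.+1.
Proof.
set A := (2 * m)`!; set B := (2 * n)`!; set a := m`!; set b := n`!; set c := (m + n)`!.
set K : rat := (A * B)%:R / (a * b * c * (m + n).+1)%:R.
have pos : (0 < a * b * c * (m + n).+1)%N by rewrite !muln_gt0 !fact_gt0.
have E1 : superCatalan m.+1 n = K * (2 * (2 * m).+1)%:R.
  rewrite /K mulrAC -natrM /superCatalan; apply: divnat; rewrite ?muln_gt0 ?fact_gt0 //.
  rewrite mulnS add2n addSn !factS /A /B /a /b /c.
  rewrite -!multE -!plusE. ring.
have E2 : superCatalan m n.+1 = K * (2 * (2 * n).+1)%:R.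
  rewrite /K mulrAC -natrM /superCatalan; apply: divnat; rewrite ?muln_gt0 ?fact_gt0 //.
  rewrite mulnS add2n addnS !factS /A /B /a /b /c.
  rewrite -!multE -!plusE. ring.
have E0 : superCatalan m n = K * (m + n).+1%:R.
  rewrite /K mulrAC -natrM /superCatalan; apply: divnat; rewrite ?muln_gt0 ?fact_gt0 //.
  rewrite /A /B /a /b /c.
  rewrite -!multE -!plusE. ring.
apply/eqP; rewrite eq_sym subr_eq E1 E2 E0 -mulrDr -mulrnAr -natrD -mulr_natr -natrM.
apply/eqP; congr (_ * _%:R).
rewrite -!multE -!plusE. ring.
Qed.

Lemma TS m : forall n, T m n = superCatalan m n.
Proof.
elim: m => [|m IH] n; first by rewrite Tbase Sbase.
by rewrite Trec Srec !IH.
Qed.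

Theorem mainTheorem1 (m n : nat) :
  superCatalan m n =
  ((-1) ^+ m * \sum_(t : (2 * (m + n)).-tuple bool | lattice_path t)
                 (-1) ^+ (height t (2 * m)) :> rat)%R.
Proof.
rewrite -TS /T /G.
have hk : (2 * m <= 2 * (m + n))%N by rewrite leq_mul2l leq_addr orbT.
rewrite /lattice_path /height key //.
by rewrite mulnDr addKn.
Qed.
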